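(* Let $K\ge L\ge T\ge 2$ be integers and let $(q,\boldsymbol{\alpha}^{(p)},\boldsymbol{\alpha}^{(s)},\boldsymbol{\beta}^{(p)},\boldsymbol{\beta}^{(s)})$ be the tuple $\mathrm{CAT}_x(K,L,T)$ described in the context, for any positive integer $x$ coprime to $q$. Then this tuple is a cyclic-addition degree table (CAT) for parameters $K,L,T$ with number of unique entries $$N=(K+1)(L+1)+(T-1)^2+\kappa+\lambda .$$
   Context: Construction $\mathrm{CAT}_x$: Let $K\ge L\ge T\ge 2$ be integers. Let $\kappa,\lambda$ be the smallest non-negative integers such that $K+1+\kappa$ and $L+1+\lambda$ are coprime to $T-1$. Put $K^\star=K+1+\kappa$, $L^\star=L+1+\lambda$, $\bar T=T-1$ and $q=K^\star L^\star+\bar T^2$. Let $x$ be a positive integer coprime to $q$ and let $y\in\{0,\dots,q-1\}$ be the (unique) integer with $x\bar T+yK^\star\equiv 0\pmod q$. Define vectors over $\mathbb{Z}_q$ (integers mod $q$): $\boldsymbol{\alpha}^{(p)}=(0,y,2y,\dots,(K-1)y)\bmod q\in\mathbb{Z}_q^K$, $\boldsymbol{\alpha}^{(s)}=(Ky,\;Ky+x,\;\dots,\;Ky+(T-1)x)\bmod q\in\mathbb{Z}_q^T$, $\boldsymbol{\beta}^{(p)}=(0,x,2x,\dots,(L-1)x)\bmod q\in\mathbb{Z}_q^L$, $\boldsymbol{\beta}^{(s)}=(-x,\;y-x,\;\dots,\;(T-1)y-x)\bmod q\in\mathbb{Z}_q^T$. Definition (CAT). For a positive integer $q$ and vectors $\boldsymbol{\alpha}^{(p)}\in\mathbb{Z}_q^K,\boldsymbol{\alpha}^{(s)}\in\mathbb{Z}_q^T,\boldsymbol{\beta}^{(p)}\in\mathbb{Z}_q^L,\boldsymbol{\beta}^{(s)}\in\mathbb{Z}_q^T$,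 write $\{\mathbf v\}$ for the set of entries of a vector $\mathbf v$ and let (all additions in $\mathbb{Z}_q$) $\mathcal{TL}=\{\boldsymbol{\alpha}^{(p)}\}+\{\boldsymbol{\beta}^{(p)}\}$, $\mathcal{TR}=\{\boldsymbol{\alpha}^{(p)}\}+\{\boldsymbol{\beta}^{(s)}\}$, $\mathcal{BL}=\{\boldsymbol{\alpha}^{(s)}\}+\{\boldsymbol{\beta}^{(p)}\}$, $\mathcal{BR}=\{\boldsymbol{\alpha}^{(s)}\}+\{\boldsymbol{\beta}^{(s)}\}$ (sumsets $\mathcal A+\mathcal B=\{a+b: a\in\mathcal A,b\in\mathcal B\}$), and let $\boldsymbol\gamma$ be the vector listing the elements of $\mathcal{TL}\cup\mathcal{TR}\cup\mathcal{BL}\cup\mathcal{BR}$ in ascending order (identifying $\mathbb{Z}_q$ with $\{0,\dots,q-1\}$). For a vector $\boldsymbol\rho$ of length $n$ of $q$-th roots of unity in a field and a vector $\boldsymbol\delta$ of length $m$ with entries in $\mathbb{Z}_q$, $\mathbf V(\boldsymbol\rho,\boldsymbol\delta)$ is the $n\times m$ matrix with $(i,j)$ entry $\rho_i^{\delta_j}$. The tuple $(q,\boldsymbol{\alpha}^{(p)},\boldsymbol{\alpha}^{(s)},\boldsymbol{\beta}^{(p)},\boldsymbol{\beta}^{(s)})$ is a cyclic-addition degree table for parameters $K,L,T$ with $N$ unique entries if: (I) $|\mathcal{TL}\cup\mathcal{TR}\cup\mathcal{BL}\cup\mathcal{BR}|=N$; (II) $|\mathcal{TL}|=KL$; (III)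 $\mathcal{TL}\cap\mathcal{TR}=\mathcal{TL}\cap\mathcal{BL}=\mathcal{TL}\cap\mathcal{BR}=\emptyset$; (IV) in every prime field $\mathbb{F}_p$ with $q\mid p-1$ there exist $N$ $q$-th roots of unity $\boldsymbol\rho=(\rho_1,\dots,\rho_N)$ such that (a) $\mathbf V(\boldsymbol\rho,\boldsymbol\gamma)$ is invertible and (b) all $T\times T$ submatrices of $\mathbf V(\boldsymbol\rho,\boldsymbol{\alpha}^{(s)})$ and of $\mathbf V(\boldsymbol\rho,\boldsymbol{\beta}^{(s)})$ are invertible. *)

(* Defs.v *)
From HB Require Import structures.
From mathcomp Require Import all_boot all_order all_algebra.
Set Implicit Arguments. Unset Strict Implicit. Unset Printing Implicit Defensive.
Import Order.TTheory GRing.Theory Num.Theory.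

(* Elements of Z_q are represented by natural numbers in {0,...,q-1};
   vectors over Z_q are sequences of such naturals. *)

Definition entries (v : seq nat) : seq nat := undup v.

Definition sumset (q : nat) (A B : seq nat) : seq nat :=
  undup [seq (a + b) %% q | a <- A, b <- B].

Definition TLset q (ap as_ bp bs : seq nat) := sumset q ap bp.
Definition TRset q (ap as_ bp bs : seq nat) := sumset q ap bs.
Definition BLset q (ap as_ bp bs : seq nat) := sumset q as_ bp.
Definition BRset q (ap as_ bp bs : seq nat) := sumset q as_ bs.

Definition unionset q ap as_ bp bs : seq nat :=
  undup (TLset q ap as_ bp bs ++ TRset q ap as_ bp bs
         ++ BLset q ap as_ bp bs ++ BRset q ap as_ bp bs).

Definition gammavec q ap as_ bp bs : seq nat := sort leq (unionset q ap as_ bp bs).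

Definition disjointl (A B : seq nat) : bool := all (fun a => a \notin B) A.

Definition Vmx (F : pzRingType) (n m : nat) (rho : 'I_n -> F) (delta : seq nat)
  : 'M[F]_(n, m) := \matrix_(i < n, j < m) ((rho i) ^+ (nth 0%N delta j))%R.

Definition is_CAT (q : nat) (ap as_ bp bs : seq nat) (K L T N : nat) : Prop :=
  [/\ size ap = K, size as_ = T, size bp = L, size bs = T
    & all (fun a => a < q) (ap ++ as_ ++ bp ++ bs)] /\
  [/\ size (unionset q ap as_ bp bs) = N,
  size (TLset q ap as_ bp bs) = (K * L)%N,
  [&& disjointl (TLset q ap as_ bp bs) (TRset q ap as_ bp bs),
                 disjointl (TLset q ap as_ bp bs) (BLset q ap as_ bp bs) &
                 disjointl (TLset q ap as_ bp bs) (BRset q ap as_ bp bs)]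
  &
    forall p : nat, prime p -> q %| p.-1 ->
      exists rho : 'I_N -> 'F_p,
        [/\ forall i, ((rho i) ^+ q = 1)%R,
            (\det (@Vmx _ N N rho (gammavec q ap as_ bp bs)))%R != 0%R,
            forall f : 'I_T -> 'I_N, injective f ->
              (\det (\matrix_(i < T, j < T) (rho (f i)) ^+ (nth 0%N as_ j)))%R != 0%R
          & forall f : 'I_T -> 'I_N, injective f ->
              (\det (\matrix_(i < T, j < T) (rho (f i)) ^+ (nth 0%N bs j)))%R != 0%R]].

Definition Kstar (K kappa : nat) := (K + 1 + kappa)%N.
Definition Lstar (L lambda : nat) := (L + 1 + lambda)%N.
Definition CATq (K L T kappa lambda : nat) : nat :=
  (Kstar K kappa * Lstar L lambda + (T - 1) ^ 2)%N.

Definition cat_alpha_p (q K y : nat) : seq nat := [seq (i * y) %% q | i <- iota 0 K].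
Definition cat_alpha_s (q K T x y : nat) : seq nat :=
  [seq (K * y + i * x) %% q | i <- iota 0 T].
Definition cat_beta_p (q L x : nat) : seq nat := [seq (i * x) %% q | i <- iota 0 L].
(* (i*y - x) mod q, computed in nat as (i*y + (q - x mod q)) mod q *)
Definition cat_beta_s (q T x y : nat) : seq nat :=
  [seq (i * y + (q - x %% q)) %% q | i <- iota 0 T].

(* Main.v *)
Require Import Defs.
From HB Require Import structures.
From mathcomp Require Import all_boot all_order all_algebra all_fingroup all_solvable all_field.
From mathcomp Require Import zify ring lra.
Import Order.TTheory GRing.Theory Num.Theory.

Section IntLemmas.
Local Open Scope ring_scope.

Lemma lat_int (Ks Ls t q x y da db : int) :
  q = Ks * Ls + t ^+ 2 -> q != 0 -> coprimez q x -> coprimez q Ks ->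
  (q %| x * t + y * Ks)%Z -> (q %| da * y + db * x)%Z ->
  exists m n, da = m * Ks - n * t /\ db = m * t + n * Ls.
Proof.
move=> eq qn0 cqx cqK h1 h2.
have e1 : (q %| x * (db * Ks - da * t))%Z.
  rewrite (_ : x * _ = Ks * (da * y + db * x) - da * (x * t + y * Ks)); last by ring.
  by apply: rpredB; apply: dvdz_mull.
move: e1; rewrite Gauss_dvdzr // => /dvdzP [n hn].
have e2 : (q %| Ks * (y * t - x * Ls))%Z.
  rewrite (_ : Ks * _ = t * (x * t + y * Ks) - x * q); last by rewrite eq; ring.
  by apply: rpredB; [apply: dvdz_mull | apply: dvdz_mull; apply: dvdzz].
move: e2; rewrite Gauss_dvdzr // => e2.
have e3 : (q %| x * (da * Ls + db * t))%Z.
  rewrite (_ : x * _ = t * (da * y + db * x) - da * (y * t - x * Ls)); last by ring.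
  by apply: rpredB; apply: dvdz_mull.
move: e3; rewrite Gauss_dvdzr // => /dvdzP [m hm].
exists m, n; split.
- apply: (mulIf qn0).
  rewrite (_ : da * q = Ks * (da * Ls + db * t) - t * (db * Ks - da * t)); last by rewrite eq; ring.
  rewrite hm hn; ring.
- apply: (mulIf qn0).
  rewrite (_ : db * q = Ls * (db * Ks - da * t) + t * (da * Ls + db * t)); last by rewrite eq; ring.
  rewrite hm hn; ring.
Qed.

Lemma latt (Ks Ls t Ba Bb da db m n : int) :
  0 <= t -> 0 <= Ks -> 0 <= Ls -> Ba < Ks + t -> Ba < 2 * Ks -> Bb < Ls + t -> Bb < 2 * Ls ->
  da = m * Ks - n * t -> db = m * t + n * Ls ->
  - Ba <= da -> da <= Ba -> - Bb <= db -> db <= Bb ->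
  (m = 0 /\ n = 0) \/ (m = 1 /\ n = 0) \/ (m = -1 /\ n = 0) \/ (m = 0 /\ n = 1) \/ (m = 0 /\ n = -1).
Proof.
move=> ht hK hL h1 h2 h3 h4 -> -> h5 h6 h7 h8.
have [hm|[hm|hm]] : m <= -1 \/ m = 0 \/ 1 <= m by lia.
- have [hn|[hn|hn]] : n <= -1 \/ n = 0 \/ 1 <= n by lia.
  + nia.
  + subst n. have [e|e] : m = -1 \/ m <= -2 by lia. by subst; tauto.
    nia.
  + nia.
- subst m. have [hn|[hn|hn]] : n <= -1 \/ n = 0 \/ 1 <= n by lia.
  + have [e|e] : n = -1 \/ n <= -2 by lia. by subst; tauto. nia.
  + by subst; tauto.
  + have [e|e] : n = 1 \/ 2 <= n by lia. by subst; tauto. nia.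
- have [hn|[hn|hn]] : n <= -1 \/ n = 0 \/ 1 <= n by lia.
  + nia.
  + subst n. have [e|e] : m = 1 \/ 2 <= m by lia. by subst; tauto. nia.
  + nia.
Qed.
End IntLemmas.

Lemma nat_mod_dvdz (m n d : nat) : m = n %[mod d] -> (d%:Z %| (m%:Z - n%:Z)%R)%Z.
Proof. by move=> h; rewrite -eqz_mod_dvd; apply/eqP; rewrite !modz_nat h. Qed.

Definition rect (a0 na b0 nb : nat) : seq (nat * nat) :=
  locked [seq (a, b) | a <- iota a0 na, b <- iota b0 nb].

Lemma mem_rect a0 na b0 nb P :
  (P \in rect a0 na b0 nb) = (a0 <= P.1 < a0 + na) && (b0 <= P.2 < b0 + nb).
Proof.
rewrite /rect -lock; case: P => a b /=; apply/allpairsP/andP => [[[a' b'] /= [ha hb [-> ->]]]|[ha hb]].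
  by rewrite -!mem_iota.
by exists (a, b); rewrite !mem_iota.
Qed.

Lemma size_rect a0 na b0 nb : size (rect a0 na b0 nb) = na * nb.
Proof. by rewrite /rect -lock size_allpairs !size_iota. Qed.

Lemma uniq_rect a0 na b0 nb : uniq (rect a0 na b0 nb).
Proof. by rewrite /rect -lock; apply: allpairs_uniq; rewrite ?iota_uniq // => -[? ?] [? ?] _ _. Qed.

Lemma dvdz_nat_mod (m n d : nat) : (d%:Z %| (m%:Z - n%:Z)%R)%Z -> m = n %[mod d].
Proof. by rewrite -eqz_mod_dvd !modz_nat => /eqP [] . Qed.

Lemma mem_sumset q' z A B :
  reflect (exists a b, [/\ a \in A, b \in B & z = (a + b) %% q']) (z \in sumset q' A B).
Proof.
rewrite /sumset mem_undup; apply: (iffP allpairsP) => [[[a b] /= [ha hb ->]]|[a [b [ha hb ->]]]].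
  by exists a, b.
by exists (a, b).
Qed.

Section Comb.
Variables K L T ka la x y : nat.
Hypothesis hT : 2 <= T.
Hypothesis hTL : T <= L.
Hypothesis hLK : L <= K.
Hypothesis hcK : coprime (K + 1 + ka) (T - 1).
Hypothesis hmK : forall k, k < ka -> ~~ coprime (K + 1 + k) (T - 1).
Hypothesis hcL : coprime (L + 1 + la) (T - 1).
Hypothesis hmL : forall l, l < la -> ~~ coprime (L + 1 + l) (T - 1).
Hypothesis hx : 0 < x.
Hypothesis hxq : coprime x (CATq K L T ka la).
Hypothesis hxy : (x * (T - 1) + y * Kstar K ka) %% CATq K L T ka la = 0.

Local Notation q := (CATq K L T ka la).
Local Notation Ks := (K + 1 + ka).
Local Notation Ls := (L + 1 + la).
Local Notation t := (T - 1).

Lemma qE : q = Ks * Ls + t ^ 2.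
Proof. by []. Qed.

Lemma q_gt0 : 0 < q.
Proof. rewrite qE; apply: ltn_addr; rewrite muln_gt0; apply/andP; split; lia. Qed.

Lemma min_le (n : nat) (kk : nat) :
  (forall k, k < kk -> ~~ coprime (n + 1 + k) t) -> kk <= T - 2.
Proof.
move=> hm; rewrite leqNgt; apply/negP => hlt.
set k := (t - n %% t) %% t.
have hk : k < kk.
  have : k < t by rewrite /k ltn_pmod //; lia.
  lia.
move: (hm k hk); apply/negP; apply/negPn.
rewrite -coprime_modl.
have e : (n + k) %% t = 0.
  rewrite /k modnDmr -modnDml.
  have -> : n %% t + (t - n %% t) = t.
    have : n %% t < t by rewrite ltn_pmod //; lia.
    lia.
  by rewrite modnn.
have -> : (n + 1 + k) %% t = 1 %% t.
  by rewrite (addnC n 1) -addnA addnC -modnDml e.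
by rewrite coprime_modl coprime1n.
Qed.

Lemma ka_le : ka <= T - 2.
Proof. exact: (@min_le K ka hmK). Qed.
Lemma la_le : la <= T - 2.
Proof. exact: (@min_le L la hmL). Qed.


Definition g (a B : nat) := (a * y + B * x + (q - x %% q)) %% q.

Lemma gS a B : g a B.+1 = (a * y + B * x) %% q.
Proof.
rewrite /g (_ : a * y + B.+1 * x + (q - x %% q) = (x %/ q).+1 * q + (a * y + B * x)).
  by rewrite modnMDl.
have := divn_eq x q; have := ltn_pmod x q_gt0; nia.
Qed.

Lemma gmod a B a' B' : g a B = g a' B' -> a * y + B * x = a' * y + B' * x %[mod q].
Proof. by move=> h; apply/eqP; rewrite -(eqn_modDr (q - x %% q)); apply/eqP. Qed.

Lemma modg a B a' B' : a * y + B * x = a' * y + B' * x %[mod q] -> g a B = g a' B'.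
Proof. by move=> h; apply/eqP; rewrite /g eqn_modDr; apply/eqP. Qed.

Lemma cop_Ks_q : coprime Ks q.
Proof.
rewrite -coprime_modr qE mulnC modnMDl coprime_modr.
by rewrite coprime_pexpr // coprime_sym.
Qed.

Lemma hxy' : (q %| x * t + y * Ks).
Proof. by apply/eqP; exact: hxy. Qed.

Lemma g_inj a B a' B' : g a B = g a' B' ->
  a <= K + T - 1 -> a' <= K + T - 1 -> B <= L + la -> B' <= L + la ->
  (a = a' /\ B = B') \/ (a' = a + Ks /\ B' = B + t) \/ (a = a' + Ks /\ B = B' + t)
  \/ (a' + t = a /\ B' = B + Ls) \/ (a + t = a' /\ B = B' + Ls).
Proof.
move=> /gmod /nat_mod_dvdz hd ha ha' hB hB'.
have q0 : (q%:Z != 0)%R by have := q_gt0; lia.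
have cqx : coprimez q%:Z x%:Z by rewrite coprimezE !absz_nat coprime_sym.
have cqK : coprimez q%:Z Ks%:Z by rewrite coprimezE !absz_nat coprime_sym cop_Ks_q.
have h1 : (q%:Z %| (x%:Z * t%:Z + y%:Z * Ks%:Z)%R)%Z.
  by rewrite -!PoszM -PoszD dvdzE !absz_nat hxy'.
have h2 : (q%:Z %| ((a%:Z - a'%:Z) * y%:Z + (B%:Z - B'%:Z) * x%:Z)%R)%Z.
  by move: hd; rewrite (_ : ((a * y + B * x)%:Z - (a' * y + B' * x)%:Z = (a%:Z - a'%:Z) * y%:Z + (B%:Z - B'%:Z) * x%:Z)%R) //; lia.
have eq : (q%:Z = Ks%:Z * Ls%:Z + t%:Z ^+ 2)%R by rewrite qE; lia.
have [m [n [e1 e2]]] := @lat_int _ _ _ _ _ _ _ _ eq q0 cqx cqK h1 h2.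
have := @latt Ks Ls t ((K + T - 1)%:Z)%R ((L + la)%:Z)%R (a%:Z - a'%:Z)%R (B%:Z - B'%:Z)%R m n.
have c1 : (0 <= t%:Z)%R by lia.
have c2 : (0 <= Ks%:Z)%R by lia.
have c3 : (0 <= Ls%:Z)%R by lia.
have c4 : ((K + T - 1)%:Z < Ks%:Z + t%:Z)%R by lia.
have c5 : ((K + T - 1)%:Z < 2 * Ks%:Z)%R by lia.
have c6 : ((L + la)%:Z < Ls%:Z + t%:Z)%R by lia.
have c7 : ((L + la)%:Z < 2 * Ls%:Z)%R by lia.
move=> /(_ c1 c2 c3 c4 c5 c6 c7 e1 e2).
have d1 : (- (K + T - 1)%:Z <= a%:Z - a'%:Z)%R by lia.
have d2 : (a%:Z - a'%:Z <= (K + T - 1)%:Z)%R by lia.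
have d3 : (- (L + la)%:Z <= B%:Z - B'%:Z)%R by lia.
have d4 : (B%:Z - B'%:Z <= (L + la)%:Z)%R by lia.
move=> /(_ d1 d2 d3 d4).
clear hd h1 h2 eq cqx cqK q0 c1 c2 c3 c4 c5 c6 c7 d1 d2 d3 d4.
case=> [[hm hn]|[[hm hn]|[[hm hn]|[[hm hn]|[hm hn]]]]]; rewrite hm hn in e1 e2; clear -e1 e2; lia.
Qed.



Definition DA := rect 0 K 1 L.
Definition DB := rect (t - ka) (K - (t - ka)) 0 1.
Definition DC := rect K 1 T (L + la + 1 - T).
Definition DE := rect K T 0 T.
Definition Dr := DB ++ DC ++ DE.
Definition D := DA ++ Dr.
Definition gP (P : nat * nat) := g P.1 P.2.

Lemma size_D : size D = (K + 1) * (L + 1) + (T - 1) ^ 2 + ka + la.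
Proof.
have := ka_le; have := la_le.
rewrite /D /Dr !size_cat !size_rect.
have -> : (T - 1) ^ 2 = (T - 1) * (T - 1) by rewrite expnS expn1.
have e1 : (K + 1) * (L + 1) = K * L + K + L + 1 by ring.
have e2 : (T - 1) * (T - 1) + 2 * T = T * T + 1.
  have [u hu] : exists u, T = u.+1 by exists T.-1; lia.
  by rewrite hu subn1 /=; ring.
rewrite e1 ?muln1 ?mul1n; move: e2.
rewrite ?size_map ?size_iota /=.
set X := (T - 1) * (T - 1); set Y := T * T; set Z := K * L.
lia.
Qed.

Lemma DA_Dr P : P \in DA -> P \in Dr -> False.
Proof.
rewrite /Dr /DA /DB /DC /DE !mem_cat !mem_rect; case: P => a b /=; lia.
Qed.

Lemma uniq_D : uniq D.
Proof.
have := ka_le; have := la_le => h1 h2.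
rewrite /D /Dr !cat_uniq !uniq_rect /=; apply/and3P; split.
- apply/hasPn => P; rewrite !mem_cat => /orP[|/orP[]] hP; apply/negP => hA; apply: (@DA_Dr P) => //;
  by rewrite /Dr !mem_cat hP ?orbT.
- apply/hasPn => P; rewrite !mem_cat !mem_rect; case: P => a b /=; lia.
- rewrite andbT; apply/hasPn => P; rewrite !mem_rect; case: P => a b /=; lia.
Qed.

Lemma D_bounds P : P \in D -> P.1 <= K + T - 1 /\ P.2 <= L + la.
Proof.
have := ka_le; have := la_le => h1 h2.
rewrite /D /Dr /DA /DB /DC /DE !mem_cat !mem_rect; case: P => a b /=; lia.
Qed.

Lemma injD : {in D &, injective gP}.
Proof.
have := ka_le; have := la_le => h1 h2.
move=> P P' hP hP' e.
have [b1 b2] := D_bounds _ hP; have [b3 b4] := D_bounds _ hP'.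
have := g_inj _ _ _ _ e b1 b3 b2 b4.
move: hP hP'; rewrite /D /Dr /DA /DB /DC /DE !mem_cat !mem_rect.
case: P {e b1 b2 b3 b4} => a b; case: P' => a' b' /=.
move=> hP hP' [[-> ->]|] //; lia.
Qed.

Lemma cong1 a B : g (a + Ks) (B + t) = g a B.
Proof.
apply: modg; have h := hxy; rewrite /Kstar in h.
rewrite (_ : (a + Ks) * y + (B + t) * x = (a * y + B * x) + (x * t + y * Ks)); last by ring.
by rewrite -modnDmr h addn0.
Qed.

Lemma tyLx : t * y = Ls * x %[mod q].
Proof.
apply: dvdz_nat_mod.
have q0 : (q%:Z != 0)%R by have := q_gt0; lia.
have cqK : coprimez q%:Z Ks%:Z by rewrite coprimezE !absz_nat coprime_sym cop_Ks_q.
have h1 : (q%:Z %| (x%:Z * t%:Z + y%:Z * Ks%:Z)%R)%Z.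
  by rewrite -!PoszM -PoszD dvdzE !absz_nat hxy'.
have eq : (q%:Z = Ks%:Z * Ls%:Z + t%:Z ^+ 2)%R by rewrite qE; lia.
rewrite -(Gauss_dvdzr _ cqK).
rewrite (_ : (Ks%:Z * ((t * y)%:Z - (Ls * x)%:Z) = t%:Z * (x%:Z * t%:Z + y%:Z * Ks%:Z) - x%:Z * q%:Z)%R); last first.
  by rewrite eq PoszM PoszM; ring.
by apply: rpredB; [apply: dvdz_mull | apply: dvdz_mull; apply: dvdzz].
Qed.

Lemma cong2 a B : g (a + t) B = g a (B + Ls).
Proof.
apply: modg.
rewrite (_ : (a + t) * y + B * x = a * y + B * x + t * y); last by ring.
rewrite (_ : a * y + (B + Ls) * x = a * y + B * x + Ls * x); last by ring.
by rewrite -modnDmr tyLx modnDmr.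
Qed.

Lemma eTL i k : ((i * y) %% q + (k * x) %% q) %% q = g i k.+1.
Proof. by rewrite modnDm gS. Qed.

Lemma eTR i j : ((i * y) %% q + (j * y + (q - x %% q)) %% q) %% q = g (i + j) 0.
Proof. by rewrite modnDm /g mul0n addn0 mulnDl addnA. Qed.

Lemma eBL i k : ((K * y + i * x) %% q + (k * x) %% q) %% q = g K (i + k).+1.
Proof. by rewrite modnDm gS mulnDl addnA. Qed.

Lemma eBR i j : ((K * y + i * x) %% q + (j * y + (q - x %% q)) %% q) %% q = g (K + j) i.
Proof. rewrite modnDm /g; congr (_ %% _); ring. Qed.

Local Notation ap := (cat_alpha_p q K y).
Local Notation as_ := (cat_alpha_s q K T x y).
Local Notation bp := (cat_beta_p q L x).
Local Notation bs := (cat_beta_s q T x y).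

Ltac inDr := rewrite /Dr /DB /DC /DE !mem_cat !mem_rect /=; have := ka_le; have := la_le; lia.

Lemma memTL z : (z \in TLset q ap as_ bp bs) = (z \in map gP DA).
Proof.
apply/idP/idP.
- move/mem_sumset => [a [b [ha hb ->]]].
  move: ha hb => /mapP[i hi ->] /mapP[k hk ->].
  rewrite eTL; apply/mapP; exists (i, k.+1) => //.
  by rewrite /DA mem_rect /=; move: hi hk; rewrite !mem_iota; lia.
- move/mapP => [[i b] hP ->]; move: hP; rewrite /DA mem_rect /= => hP.
  have -> : b = b.-1.+1 by lia.
  rewrite /gP /= -eTL.
  apply/mem_sumset; exists (i * y %% q), (b.-1 * x %% q); split => //;
    apply/mapP; [exists i | exists b.-1] => //; rewrite mem_iota; lia.
Qed.

Lemma subTR z : z \in TRset q ap as_ bp bs -> z \in map gP Dr.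
Proof.
move/mem_sumset => [a [b [ha hb ->]]].
move: ha hb => /mapP[i hi ->] /mapP[j hj ->].
move: hi hj; rewrite !mem_iota => hi hj.
rewrite eTR.
have [h1|h1] := leqP (t - ka) (i + j).
  by apply/mapP; exists (i + j, 0) => //; inDr.
rewrite -cong1; apply/mapP; exists (i + j + Ks, 0 + t) => //; inDr.
Qed.

Lemma subBL z : z \in BLset q ap as_ bp bs -> z \in map gP Dr.
Proof.
move/mem_sumset => [a [b [ha hb ->]]].
move: ha hb => /mapP[i hi ->] /mapP[k hk ->].
move: hi hk; rewrite !mem_iota => hi hk.
rewrite eBL.
have [h1|h1] := leqP Ls (i + k).+1.
  have -> : (i + k).+1 = (i + k).+1 - Ls + Ls by lia.
  rewrite -cong2; apply/mapP; exists (K + t, (i + k).+1 - Ls) => //; inDr.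
by apply/mapP; exists (K, (i + k).+1) => //; inDr.
Qed.

Lemma subBR z : z \in BRset q ap as_ bp bs -> z \in map gP Dr.
Proof.
move/mem_sumset => [a [b [ha hb ->]]].
move: ha hb => /mapP[i hi ->] /mapP[j hj ->].
move: hi hj; rewrite !mem_iota => hi hj.
by rewrite eBR; apply/mapP; exists (K + j, i) => //; inDr.
Qed.

Lemma supDr z : z \in map gP Dr ->
  z \in TRset q ap as_ bp bs ++ BLset q ap as_ bp bs ++ BRset q ap as_ bp bs.
Proof.
have := ka_le; have := la_le => h1 h2.
move/mapP => [[a b] hP ->]; move: hP; rewrite /Dr /DB /DC /DE !mem_cat !mem_rect /=.
case/orP => [hP|/orP[hP|hP]]; rewrite ?mem_cat.
- have -> : b = 0 by lia.
  rewrite /gP /= -(addn0 a) -eTR; apply/orP; left.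
  apply/mem_sumset; exists (a * y %% q), ((0 * y + (q - x %% q)) %% q); split => //;
    apply/mapP; [exists a | exists 0] => //; rewrite mem_iota; lia.
- have -> : a = K by lia.
  have -> : b = (t + (b - T)).+1 by lia.
  rewrite /gP /= -eBL; apply/orP; right; apply/orP; left.
  apply/mem_sumset; exists ((K * y + t * x) %% q), ((b - T) * x %% q); split => //;
    apply/mapP; [exists t | exists (b - T)] => //; rewrite mem_iota; lia.
- have -> : a = K + (a - K) by lia.
  rewrite /gP /= -eBR; apply/orP; right; apply/orP; right.
  apply/mem_sumset; exists ((K * y + b * x) %% q), (((a - K) * y + (q - x %% q)) %% q); split => //;
    apply/mapP; [exists b | exists (a - K)] => //; rewrite mem_iota; lia.
Qed.

Lemma memU z : (z \in unionset q ap as_ bp bs) = (z \in map gP D).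
Proof.
rewrite /unionset mem_undup /D map_cat !mem_cat -memTL.
apply/idP/idP.
- case/orP => [->//|/orP[/subTR|/orP[/subBL|/subBR]]] ->; by rewrite orbT.
- case/orP => [->//|/supDr]; rewrite !mem_cat => ->; by rewrite orbT.
Qed.

Lemma size_U : size (unionset q ap as_ bp bs) = (K + 1) * (L + 1) + (T - 1) ^ 2 + ka + la.
Proof.
rewrite -size_D -(size_map gP); apply: perm_size; apply: uniq_perm.
- exact: undup_uniq.
- by rewrite (map_inj_in_uniq injD) uniq_D.
- exact: memU.
Qed.

Lemma size_TL : size (TLset q ap as_ bp bs) = K * L.
Proof.
rewrite -[K * L](size_rect 0 K 1 L) -/DA -(size_map gP); apply: perm_size; apply: uniq_perm.
- exact: undup_uniq.
- rewrite map_inj_in_uniq ?uniq_rect //.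
  by apply: sub_in2 injD => P hP; rewrite /D mem_cat hP.
- exact: memTL.
Qed.

Lemma disj_gen (S : seq nat) : (forall z, z \in S -> z \in map gP Dr) ->
  disjointl (TLset q ap as_ bp bs) S.
Proof.
move=> hS; apply/allP => z; rewrite memTL => /mapP[P hP ->]; apply/negP.
move=> /hS /mapP[P' hP' e].
have e' : P = P' by apply: injD => //; rewrite /D mem_cat ?hP ?hP' ?orbT.
by subst P'; apply: (DA_Dr _ hP hP').
Qed.

Lemma disj3 : [&& disjointl (TLset q ap as_ bp bs) (TRset q ap as_ bp bs),
                 disjointl (TLset q ap as_ bp bs) (BLset q ap as_ bp bs) &
                 disjointl (TLset q ap as_ bp bs) (BRset q ap as_ bp bs)].
Proof.
by apply/and3P; split; apply: disj_gen => z; [move/subTR|move/subBL|move/subBR].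
Qed.

Lemma sizes_ok : [/\ size ap = K, size as_ = T, size bp = L, size bs = T
    & all (fun a => a < q) (ap ++ as_ ++ bp ++ bs)].
Proof.
rewrite !size_map !size_iota; split => //.
apply/allP => z; rewrite !mem_cat => /orP[|/orP[|/orP[]]] /mapP[i _ ->]; exact: ltn_pmod q_gt0.
Qed.

Lemma cop_y_q : coprime y q.
Proof.
rewrite /coprime; apply/eqP; set d := gcdn y q.
have dy : d %| y by apply: dvdn_gcdl.
have dq : d %| q by apply: dvdn_gcdr.
have dxt : d %| x * t.
  have h : d %| x * t + y * Ks by apply: dvdn_trans dq hxy'.
  by rewrite dvdn_addl in h => //; apply: dvdn_mulr.
have cdx : coprime d x by rewrite coprime_sym; apply: coprime_dvdr dq hxq.
rewrite Gauss_dvdr // in dxt.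
have dKL : d %| Ks * Ls.
  have : d %| Ks * Ls + t ^ 2 by rewrite -qE.
  by rewrite dvdn_addl // (dvdn_trans dxt) // dvdn_exp.
have cdK : coprime d Ks.
  apply: (coprime_dvdl dxt); by rewrite coprime_sym.
rewrite Gauss_dvdr // in dKL.
have : d %| gcdn Ls t by rewrite dvdn_gcd dKL dxt.
by move: hcL; rewrite /coprime => /eqP ->; rewrite dvdn1 => /eqP.
Qed.

End Comb.

Lemma mod_cancel a b c q : coprime c q -> a < q -> b < q -> a * c = b * c %[mod q] -> a = b.
Proof.
move=> cq.
wlog hab : a b / b <= a.
  move=> H ha hb e; have [h|h] := leqP b a; first exact: H.
  by symmetry; apply: H => //; lia.
move=> ha hb /eqP; rewrite eqn_mod_dvd ?leq_mul // -mulnBl Gauss_dvdl; last by rewrite coprime_sym.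
move=> /dvdn_leq h.
have [e|ne] := eqVneq (a - b) 0; first lia.
have := h ltac:(lia); lia.
Qed.

Local Open Scope ring_scope.

Lemma prim_Fp p q : prime p -> (q %| p.-1)%N -> (0 < q)%N -> exists w : 'F_p, q.-primitive_root w.
Proof.
move=> pp dq q0.
pose rs := [seq z <- enum 'F_p | z != 0].
have p0 : (0 < p.-1)%N by have := prime_gt1 pp; lia.
have /hasP [w _ hw] : has (p.-1).-primitive_root rs.
  apply: has_prim_root => //.
- apply/allP => z; rewrite mem_filter => /andP[z0 _]; rewrite unity_rootE; apply/eqP.
  have h := expf_card z; rewrite card_Fp // in h.
  have e : z ^+ p = z * z ^+ p.-1 by rewrite -exprS prednK // prime_gt0.
  rewrite e in h.
  by apply: (mulfI z0); rewrite mulr1.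
- exact: (filter_uniq _ (enum_uniq _)).
- have -> : size rs = #|predC1 (0 : 'F_p)| by rewrite cardE /enum_mem /rs enumT.
  by rewrite cardC1 card_Fp.
exists (w ^+ (p.-1 %/ q)); exact: dvdn_prim_root.
Qed.

Lemma ap_det (F : fieldType) (n : nat) (z c : 'I_n -> F) :
  (forall i, c i != 0) -> injective z -> \det (\matrix_(i, j) (c i * z i ^+ j)) != 0.
Proof.
move=> hc hz.
have -> : \matrix_(i, j) (c i * z i ^+ j) =
          diag_mx (\row_i c i) *m (Vandermonde n (\row_i z i))^T.
  by apply/matrixP => i j; rewrite mul_diag_mx !mxE.
rewrite det_mulmx det_diag det_tr det_Vandermonde mulf_eq0 negb_or.
apply/andP; split; rewrite prodf_seq_neq0; apply/allP => i _ /=.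
  by rewrite mxE.
rewrite prodf_seq_neq0; apply/allP => j _; apply/implyP => hij.
rewrite !mxE subr_eq0; apply/eqP => /hz e.
by move: hij; rewrite e ltnn.
Qed.

Lemma rows_exist (F : fieldType) (w : F) (q N : nat) (gam : seq nat) :
  q.-primitive_root w -> size gam = N -> uniq gam -> all (fun a => a < q)%N gam ->
  exists r : 'I_N -> 'I_q, injective r /\ \det (@Vmx F N N (fun i => w ^+ r i) gam) != 0.
Proof.
move=> hw sg ug ag.
have hNq : (N <= q)%N.
  rewrite -sg -(size_iota 0 q); apply: uniq_leq_size => // a ha.
  by rewrite mem_iota /=; exact: (allP ag).
pose M : 'M[F]_(q, N) := \matrix_(i, j) w ^+ (i * nth 0%N gam j).
have nthlt (j : 'I_N) : (nth 0%N gam j < q)%N.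
  by apply: (allP ag); apply: mem_nth; rewrite sg.
have hdist : injective (fun j : 'I_N => w ^+ nth 0%N gam j).
  move=> j j' /eqP; rewrite (eq_prim_root_expr hw) !modn_small ?nthlt //.
  by rewrite nth_uniq ?sg // => /eqP /val_inj.
have rkM : row_full M.
  rewrite /row_full eqn_leq rank_leq_col /=.
  have eS : rowsub (widen_ord hNq) M =
            (\matrix_(i, j) ((fun _ => 1) i * (fun j : 'I_N => w ^+ nth 0%N gam j) i ^+ j))^T.
    by apply/matrixP => i j; rewrite !mxE /= mul1r mulnC exprM.
  have fS : row_free (rowsub (widen_ord hNq) M).
    rewrite row_free_unit unitmxE unitfE eS det_tr.
    by apply: ap_det => // i; exact: oner_neq0.
  rewrite -row_leq_rank in fS.
  apply: (leq_trans fS); apply: mxrankS; exact: rowsub_sub.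
exists (fullrankfun rkM); split; first exact: fullrankfun_inj.
have := fullrowsub_unit rkM; rewrite unitmxE unitfE.
congr (~~ (_ == _)); congr (\det _).
by apply/matrixP => i j; rewrite !mxE -exprM.
Qed.

Lemma minor_ok (F : fieldType) (w : F) (q N T c d : nat) (r : 'I_N -> 'I_q) (s : seq nat) :
  q.-primitive_root w -> injective r -> coprime d q ->
  (forall j, (j < T)%N -> nth 0%N s j = ((c + j * d) %% q)%N) ->
  forall f : 'I_T -> 'I_N, injective f ->
    \det (\matrix_(i < T, j < T) (w ^+ r (f i)) ^+ (nth 0%N s j)) != 0.
Proof.
move=> hw ri cd hs f fi.
have w0 : w != 0 by rewrite (prim_root_eq0 hw) -lt0n (prim_order_gt0 hw).
have e : \matrix_(i < T, j < T) (w ^+ r (f i)) ^+ (nth 0%N s j) =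
         \matrix_(i, j) ((w ^+ r (f i)) ^+ c * ((w ^+ r (f i)) ^+ d) ^+ j).
  apply/matrixP => i j; rewrite !mxE hs // expr_mod; last first.
    by rewrite exprAC (prim_expr_order hw) expr1n.
  by rewrite exprD mulnC exprM.
rewrite e; apply: ap_det.
  by move=> i; rewrite !expf_neq0.
move=> i i' /eqP; rewrite -!exprM (eq_prim_root_expr hw) => /eqP h.
apply: fi; apply: ri; apply: val_inj; by apply: (@mod_cancel _ _ d q cd) => //; apply: ltn_ord.
Qed.

Local Close Scope ring_scope.

Theorem theorem2 (K L T kappa lambda x y : nat) :
  2 <= T -> T <= L -> L <= K ->
  (* kappa, lambda: least non-negative integers making K+1+kappa, L+1+lambda coprime to T-1 *)
  coprime (K + 1 + kappa) (T - 1) ->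
  (forall k, k < kappa -> ~~ coprime (K + 1 + k) (T - 1)) ->
  coprime (L + 1 + lambda) (T - 1) ->
  (forall l, l < lambda -> ~~ coprime (L + 1 + l) (T - 1)) ->
  0 < x -> coprime x (CATq K L T kappa lambda) ->
  (* y in {0..q-1} with x*(T-1) + y*K^* = 0 mod q *)
  y < CATq K L T kappa lambda ->
  (x * (T - 1) + y * Kstar K kappa) %% CATq K L T kappa lambda = 0 ->
  let q := CATq K L T kappa lambda in
  is_CAT q (cat_alpha_p q K y) (cat_alpha_s q K T x y)
           (cat_beta_p q L x) (cat_beta_s q T x y)
         K L T ((K + 1) * (L + 1) + (T - 1) ^ 2 + kappa + lambda).
Proof.
move=> hT hTL hLK hcK hmK hcL hmL hx hxq hy hxy q.
split; first by apply: sizes_ok.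
have q0 : 0 < q by apply: (@q_gt0 K L T kappa lambda x y).
split.
- by apply: size_U.
- by apply: size_TL.
- by apply: disj3.
move=> p pp dqp.
have [w hw] := @prim_Fp p q pp dqp q0.
set gam := gammavec _ _ _ _ _.
have sg : size gam = ((K + 1) * (L + 1) + (T - 1) ^ 2 + kappa + lambda).
  by rewrite /gam /gammavec size_sort; apply: size_U.
have ug : uniq gam by rewrite /gam /gammavec sort_uniq; exact: undup_uniq.
have ag : all (fun a => a < q) gam.
  apply/allP => z; rewrite /gam /gammavec mem_sort.
  rewrite (@memU K L T kappa lambda x y) //.
  by move=> /mapP [P _ ->]; rewrite /gP /g ltn_pmod.
have [r [ri hdet]] := @rows_exist _ _ _ _ _ hw sg ug ag.
exists (fun i => (w ^+ r i)%R); split => //.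
- by move=> i; rewrite GRing.exprAC (prim_expr_order hw) GRing.expr1n.
- apply: (@minor_ok _ w q _ T (K * y) x r) => //.
  by move=> j hj; rewrite /cat_alpha_s (nth_map 0%N) ?size_iota // nth_iota.
- apply: (@minor_ok _ w q _ T (q - x %% q) y r) => //.
    by apply: (@cop_y_q K L T kappa lambda x y).
  by move=> j hj; rewrite /cat_beta_s (nth_map 0%N) ?size_iota // nth_iota // addnC.
Qed.
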